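(* Let $G=(X,\Sigma,\longrightarrow,X_0)$ and $R=(Z,\Sigma,\longrightarrow,Z_0)$ be automata and let $E$ be a $\Sigma_{ucr}$-controllability set from $G$ to $R$. Then $E^*=\bigcup_{\widetilde W\in E}\wp(\widetilde W)$ is a $\Sigma_{ucr}$-controllability set from $G$ to $R$. Moreover, for $E^*$ the sets $W'$ in clauses (a) and (b) can additionally be required to satisfy $W'\subseteq\bigcup_{(x,z)\in W}\{x':x\xrightarrow{\sigma}x'\}\times\{z':z\xrightarrow{\sigma}z'\}$; that is: for every $W\in E^*$ and $\sigma\in\Sigma_{uc}$ there is $W'\in E^*$ with $\mathit{match}_{G,R}(W,\sigma,W')$ and $W'$ contained in that set; and for every $W\in E^*$, $(x,z)\in W$, $\sigma\in\Sigma_r$ and $z'$ with $z\xrightarrow{\sigma}z'$ there exist $x'\in X$ and $W'\in E^*$ with $x\xrightarrow{\sigma}x'$, $(x',z')\in W'$, $\mathit{match}_{G,R}(W,\sigma,W')$ and $W'$ contained in that set.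
   Context: An automaton is a 4-tuple $A=(Q,\Sigma,\longrightarrow,Q_0)$ with state set $Q$, finite event set $\Sigma$, ${\longrightarrow}\subseteq Q\times\Sigma\times Q$ and $\emptyset\neq Q_0\subseteq Q$; write $q\xrightarrow{\sigma}q'$ for $(q,\sigma,q')\in{\longrightarrow}$. Events are partitioned into uncontrollable $\Sigma_{uc}$ and controllable $\Sigma_c$; $\Sigma_r\subseteq\Sigma$ is a fixed set of required events. For $W,W'\subseteq X\times Z$ and $\sigma\in\Sigma$, $\mathit{match}_{G,R}(W,\sigma,W')$ holds iff for all $(x,z)\in W$ and all $x'$ with $x\xrightarrow{\sigma}x'$ there is $z'$ with $z\xrightarrow{\sigma}z'$ and $(x',z')\in W'$. A set $E\subseteq\wp(X\times Z)$ is a $\Sigma_{ucr}$-controllability set from $G$ to $R$ if: (istate) there is $W_0\in E$ such that every $x_0\in X_0$ has some $z_0\in Z_0$ with $(x_0,z_0)\in W_0$; (a) for every $W\in E$ and $\sigma\in\Sigma_{uc}$ there is $W'\in E$ with $\mathit{match}_{G,R}(W,\sigma,W')$; (b) for every $W\in E$, $(x,z)\in W$, $\sigma\in\Sigma_r$ and $z'\in Z$ with $z\xrightarrow{\sigma}z'$, there exist $x'\in X$ and $W'\in E$ with $x\xrightarrow{\sigma}x'$, $(x',z')\in W'$ and $\mathit{match}_{G,R}(W,\sigma,W')$. *)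

(* Defs.v *)
From mathcomp Require Import all_boot.

Set Implicit Arguments.
Unset Strict Implicit.

Record automaton (Sigma : finType) := Automaton {
  state : Type;
  trans : state -> Sigma -> state -> Prop;
  init : state -> Prop;
  init_nonempty : exists q, init q
}.

Section Ctrl.
Variable Sigma : finType.
Variables (G R : automaton Sigma).

Definition relset := state G -> state R -> Prop.

Definition match_GR (W : relset) (s : Sigma) (W' : relset) : Prop :=
  forall x z, W x z -> forall x', trans x s x' ->
    exists z', trans z s z' /\ W' x' z'.

(* Sigma_ucr-controllability set; Suc = uncontrollable events, Sr = required events *)
Definition controllability_set (Suc Sr : pred Sigma) (E : relset -> Prop) : Prop :=
  (exists W0, E W0 /\ forall x0, init x0 -> exists z0, init z0 /\ W0 x0 z0) /\
  (forall W, E W -> forall s, Suc s -> exists W', E W' /\ match_GR W s W') /\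
  (forall W, E W -> forall x z, W x z -> forall s, Sr s -> forall z', trans z s z' ->
     exists x' W', trans x s x' /\ E W' /\ W' x' z' /\ match_GR W s W').

Definition Estar (E : relset -> Prop) : relset -> Prop :=
  fun W => exists Wt, E Wt /\ (forall x z, W x z -> Wt x z).

Definition succ_bounded (W : relset) (s : Sigma) (W' : relset) : Prop :=
  forall x' z', W' x' z' ->
    exists x z, W x z /\ trans x s x' /\ trans z s z'.
End Ctrl.

(* Main.v *)
Require Import Defs.
From mathcomp Require Import all_boot.

Theorem lemma1 (Sigma : finType) (Suc Sr : pred Sigma) (G R : automaton Sigma)
    (E : relset G R -> Prop) :
  controllability_set Suc Sr E ->
  controllability_set Suc Sr (Estar E) /\
  (forall W, Estar E W -> forall s, Suc s ->
     exists W', Estar E W' /\ match_GR W s W' /\ succ_bounded W s W') /\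
  (forall W, Estar E W -> forall x z, W x z -> forall s, Sr s ->
     forall z', trans z s z' ->
     exists x' W', trans x s x' /\ Estar E W' /\ W' x' z' /\
       match_GR W s W' /\ succ_bounded W s W').
Proof.
  move=> [[W0 [E0 H0]] [Ha Hb]].
  have A : forall W, Estar E W -> forall s, Suc s ->
     exists W', Estar E W' /\ match_GR W s W' /\ succ_bounded W s W'.
  { move=> W [Wt [EWt sub]] s Hs.
    have [W' [EW' M]] := Ha Wt EWt s Hs.
    exists (fun x' z' => W' x' z' /\ exists x z, W x z /\ trans x s x' /\ trans z s z').
    split; [exists W'; split => //; by move=> ? ? [] |].
    split.
    - move=> x z Wxz x' tx.
      have [z' [tz W'z]] := M x z (sub _ _ Wxz) x' tx.
      exists z'; split => //; split => //; by exists x, z.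
    - by move=> x' z' [_ H]. }
  have B : forall W, Estar E W -> forall x z, W x z -> forall s, Sr s ->
     forall z', trans z s z' ->
     exists x' W', trans x s x' /\ Estar E W' /\ W' x' z' /\
       match_GR W s W' /\ succ_bounded W s W'.
  { move=> W [Wt [EWt sub]] x z Wxz s Hs z' tz.
    have [x' [W' [tx [EW' [W'xz M]]]]] := Hb Wt EWt x z (sub _ _ Wxz) s Hs z' tz.
    exists x', (fun x' z' => W' x' z' /\ exists x z, W x z /\ trans x s x' /\ trans z s z').
    split => //.
    split; [exists W'; split => //; by move=> ? ? [] |].
    split; [split => //; by exists x, z |].
    split.
    - move=> x1 z1 Wxz1 x1' tx1.
      have [z1' [tz1 W'z]] := M x1 z1 (sub _ _ Wxz1) x1' tx1.
      exists z1'; split => //; split => //; by exists x1, z1.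
    - by move=> ? ? [_ H]. }
  split; last by split.
  split; first by exists W0; split => //; exists W0.
  split.
  - move=> W EW s Hs; have [W' [? [? _]]] := A W EW s Hs; by exists W'.
  - move=> W EW x z Wxz s Hs z' tz.
    have [x' [W' [? [? [? [? _]]]]]] := B W EW x z Wxz s Hs z' tz.
    by exists x', W'.
Qed.
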